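(* Let $K=3$ and $r^\star(a)=\mathbb{1}(a=1)$ for $a\in\{1,2,3\}$. For every integer $n>500$ there exists a distribution $\mu$ on ordered pairs of distinct arms such that, if $\mathcal{D}$ consists of $n$ i.i.d. samples generated as in the context, then with probability at least $0.09$ the following holds: the empirical loss $\hat{\mathcal{L}}_{\mathsf{CE}}(\mathcal{D},\cdot)$ has no minimizer on $R_0=\{r\in\mathbb{R}^3: r(3)=0\}$, and for every sequence $(r^{(m)})_{m\ge1}\subset R_0$ with $\hat{\mathcal{L}}_{\mathsf{CE}}(\mathcal{D},r^{(m)})\to\inf_{r\in R_0}\hat{\mathcal{L}}_{\mathsf{CE}}(\mathcal{D},r)$ we have $$\mathcal{L}_{\mathsf{CE}}(r^{(m)})-\mathcal{L}_{\mathsf{CE}}(r^\star)\to+\infty\quad(m\to\infty).$$ (In the paper's phrasing: with probability at least $0.09$, $\mathcal{L}_{\mathsf{CE}}(\hat r_{\mathsf{MLE}})-\mathcal{L}_{\mathsf{CE}}(r^\star)\ge C$ for arbitrarily large $C$.)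
   Context: $K$-armed bandit preference model. Arms are $[K]$, with deterministic ground-truth rewards $r^\star(a)$. Let $\sigma(x)=e^x/(1+e^x)$. A sample $(a,a',y)$ is generated by drawing $(a,a')\sim\mu$ (a distribution on ordered pairs of distinct arms) and then $y\sim\mathrm{Bernoulli}(\sigma(r^\star(a)-r^\star(a')))$, $y=1$ meaning $a$ is preferred to $a'$; the dataset $\mathcal{D}=\{(a_i,a_i',y_i)\}_{i=1}^n$ consists of $n$ i.i.d. samples. Empirical cross-entropy loss: $$\hat{\mathcal{L}}_{\mathsf{CE}}(\mathcal{D},r)=-\frac1n\sum_{i=1}^n\Big[y_i\log\sigma(r(a_i)-r(a_i'))+(1-y_i)\log\sigma(r(a_i')-r(a_i))\Big].$$ Population cross-entropy loss: $$\mathcal{L}_{\mathsf{CE}}(r)=-\mathbb{E}_{(a,a')\sim\mu}\Big[\sigma(r^\star(a)-r^\star(a'))\log\sigma(r(a)-r(a'))+\sigma(r^\star(a')-r^\star(a))\log\sigma(r(a')-r(a))\Big].$$ The MLE $\hat r_{\mathsf{MLE}}$ is the minimizer of the empirical loss normalized by $\hat r(K)=0$. *)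

(* Defs.v *)
From HB Require Import structures.
From mathcomp Require Import all_boot all_order all_algebra.
From mathcomp Require Import all_classical all_reals all_analysis.
Set Implicit Arguments. Unset Strict Implicit. Unset Printing Implicit Defensive.
Import Order.TTheory GRing.Theory Num.Theory.
Import numFieldNormedType.Exports.
Local Open Scope classical_set_scope.
Local Open Scope ring_scope.

(* Arms [K] = {1,2,3} are encoded as 'I_3 = {0,1,2}: arm k is ordinal k-1. *)
Definition arm := 'I_3.
Definition sample := (arm * arm * bool)%type.

Section Defs.
Variable R : realType.

Definition sigmoid (x : R) : R := expR x / (1 + expR x).

Definition rstar : arm -> R := fun a => if a == ord0 then 1 else 0.

Definition pair_distr (mu : arm * arm -> R) : Prop :=
  (forall p, 0 <= mu p) /\ (\sum_(p : arm * arm) mu p = 1) /\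
  (forall a : arm, mu (a, a) = 0).

Definition sample_prob (mu : arm * arm -> R) (s : sample) : R :=
  let: (a, a', y) := s in
  mu (a, a') * (if y then sigmoid (rstar a - rstar a')
                else 1 - sigmoid (rstar a - rstar a')).

Definition dataset_prob (n : nat) (mu : arm * arm -> R)
    (E : {ffun 'I_n -> sample} -> Prop) : R :=
  \sum_(D : {ffun 'I_n -> sample} | `[< E D >]) \prod_(i < n) sample_prob mu (D i).

Definition emp_CE (n : nat) (D : {ffun 'I_n -> sample}) (r : arm -> R) : R :=
  - (n%:R)^-1 * \sum_(i < n)
      (let: (a, a', y) := D i in
       (if y then 1 else 0) * ln (sigmoid (r a - r a'))
       + (1 - (if y then 1 else 0)) * ln (sigmoid (r a' - r a))).

Definition pop_CE (mu : arm * arm -> R) (r : arm -> R) : R :=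
  - \sum_(p : arm * arm)
      mu p * (sigmoid (rstar p.1 - rstar p.2) * ln (sigmoid (r p.1 - r p.2))
              + sigmoid (rstar p.2 - rstar p.1) * ln (sigmoid (r p.2 - r p.1))).

Definition R0 : set (arm -> R) := [set r | r ord_max = 0].

End Defs.

(* Main.v *)
Require Import Defs.
From HB Require Import structures.
From mathcomp Require Import all_boot all_order all_algebra.
From mathcomp Require Import all_classical all_reals all_analysis.
From mathcomp Require Import ring lra.
Import Order.TTheory GRing.Theory Num.Theory.
Import numFieldNormedType.Exports.
Local Open Scope classical_set_scope.
Local Open Scope ring_scope.

Section S.
Variable R : realType.
Implicit Types x y : R.

Lemma sig_gt0 x : 0 < sigmoid x.
Proof. by rewrite /sigmoid divr_gt0 // ?addr_gt0 ?expR_gt0. Qed.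

Lemma sig_lt1 x : sigmoid x < 1.
Proof.
rewrite /sigmoid ltr_pdivrMr ?addr_gt0 ?expR_gt0 //; lra.
Qed.

Lemma sigN x : sigmoid (- x) = 1 - sigmoid x.
Proof.
have h := expR_gt0 x.
rewrite /sigmoid expRN; field.
by apply/andP; split; rewrite gt_eqF // ?addr_gt0 // lt0r_neq0.
Qed.

Lemma lsig_le0 x : ln (sigmoid x) <= 0.
Proof. exact/ln_le0/ltW/sig_lt1. Qed.

Lemma lsig_lt0 x : ln (sigmoid x) < 0.
Proof. by apply: ln_lt0; rewrite sig_gt0 sig_lt1. Qed.


Lemma ln_le_sub1 x : 0 < x -> ln x <= x - 1.
Proof.
move=> x0; have := expR_ge1Dx (ln x); rewrite lnK ?posrE //; lra.
Qed.

Definition a0 : arm := @Ordinal 3 0 isT.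
Definition a1 : arm := @Ordinal 3 1 isT.
Definition a2 : arm := @Ordinal 3 2 isT.
Definition s0 : sample := (a0, a1, true).
Definition s1 : sample := (a1, a2, true).
Definition s2 : sample := (a1, a2, false).

Definition shift (r : arm -> R) (c : R) : arm -> R :=
  fun a => r a + (if a == ord0 then c else 0).

Definition lam x := ln (sigmoid x).

Lemma emp_shift n (D : {ffun 'I_n -> sample}) r c :
  (forall i, D i \in [:: s0; s1; s2]) ->
  emp_CE D (shift r c) = emp_CE D r -
    (n%:R)^-1 * (\sum_(i < n) (if D i == s0 then 1 else 0)) *
      (lam (r a0 - r a1 + c) - lam (r a0 - r a1)).
Proof.
move=> HD; rewrite /emp_CE.
have -> : \sum_(i < n)
    (let: (a, a', y) := D i in
     (if y then 1 else 0) * ln (sigmoid (shift r c a - shift r c a'))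
     + (1 - (if y then 1 else 0)) * ln (sigmoid (shift r c a' - shift r c a)))
  = \sum_(i < n)
    ((let: (a, a', y) := D i in
     (if y then 1 else 0) * ln (sigmoid (r a - r a'))
     + (1 - (if y then 1 else 0)) * ln (sigmoid (r a' - r a))) +
     (if D i == s0 then 1 else 0) * (lam (r a0 - r a1 + c) - lam (r a0 - r a1))).
  apply: eq_bigr => i _.
  move: (HD i); rewrite !inE => /orP[/eqP->|/orP[]/eqP->];
    rewrite /shift /lam /= !addr0.
  - rewrite (_ : r a0 + c - r a1 = r a0 - r a1 + c); [ring|ring].
  - ring.
  - ring.
rewrite big_split /= -big_distrl /=; ring.
Qed.


Lemma sig_lt x y : x < y -> sigmoid x < sigmoid y.
Proof.
move=> xy; have ex := expR_gt0 x; have ey := expR_gt0 y.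
have h : expR x < expR y by rewrite ltr_expR.
rewrite /sigmoid ltr_pdivrMr ?addr_gt0 // mulrAC ltr_pdivlMr ?addr_gt0 //.
nra.
Qed.

Lemma lam_lt x y : x < y -> lam x < lam y.
Proof. by move=> xy; rewrite /lam ltr_ln ?posrE ?sig_gt0 // sig_lt. Qed.

Lemma lam_big d : 0 < d -> - d <= lam (- ln d).
Proof.
move=> d0; rewrite /lam /sigmoid expRN lnK ?posrE //.
have -> : d^-1 / (1 + d^-1) = (1 + d)^-1.
  have h1 : 0 < 1 + d^-1 by rewrite addr_gt0 // invr_gt0.
  have h2 : 0 < 1 + d by rewrite addr_gt0.
  field; rewrite ?lt0r_neq0 //=.
rewrite lnV ?posrE ?addr_gt0 // lerN2.
have := @ln_le_sub1 (1 + d) (addr_gt0 ltr01 d0); lra.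
Qed.

Lemma emp_ge0 n (D : {ffun 'I_n -> sample}) (r : arm -> R) : 0 <= emp_CE D r.
Proof.
rewrite /emp_CE mulNr -mulrN mulr_ge0 // ?invr_ge0 // oppr_ge0.
apply: sumr_le0 => i _; case: (D i) => [[a a'] []];
have := lsig_le0 (r a - r a'); have := lsig_le0 (r a' - r a); lra.
Qed.

Lemma K_ge1 n (D : {ffun 'I_n -> sample}) :
  (exists i, D i = s0) -> 1 <= \sum_(i < n) (if D i == s0 then 1 else 0) :> R.
Proof.
case=> i Hi; rewrite (bigD1 i) //= Hi eqxx lerDl.
by apply: sumr_ge0 => j _; case: ifP.
Qed.

Lemma pop_lb (mu : arm * arm -> R) (r : arm -> R) : (forall p, 0 <= mu p) ->
  mu (a0, a1) * sigmoid (-1) * (- lam (r a1 - r a0)) <= pop_CE mu r.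
Proof.
move=> mu0; rewrite /pop_CE -sumrN (bigD1 (a0, a1)) //=.
apply: ler_wpDr.
  apply: sumr_ge0 => p _; rewrite oppr_ge0.
  apply: mulr_ge0_le0 => //.
  have h1 : forall u v, sigmoid u * lam v <= 0.
    by move=> u v; apply: mulr_ge0_le0; [exact: ltW (sig_gt0 _) | exact: lsig_le0].
  have := h1 (rstar R p.1 - rstar R p.2) (r p.1 - r p.2).
  have := h1 (rstar R p.2 - rstar R p.1) (r p.2 - r p.1).
  rewrite /lam; lra.
rewrite /rstar /= /lam.
have := sig_gt0 (1 - 0); have := sig_gt0 (0 - 1); have := mu0 (a0, a1).
have := lsig_le0 (r a0 - r a1); have := lsig_le0 (r a1 - r a0).
rewrite (_ : 0 - 1 = -1 :> R); last by ring.
move=> h1 h2 h3 _ h5.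
have h6 : mu (a0, a1) * (sigmoid (1 - 0) * ln (sigmoid (r a0 - r a1))) <= 0.
  by apply: mulr_ge0_le0 => //; apply: mulr_ge0_le0 => //; exact: ltW.
lra.
Qed.


Lemma event n (mu : arm * arm -> R) (D : {ffun 'I_n -> sample}) :
  (0 < n)%N -> (forall p, 0 <= mu p) -> 0 < mu (a0, a1) ->
  (forall i, D i \in [:: s0; s1; s2]) -> (exists i, D i = s0) ->
      (~ exists r : arm -> R, R0 r /\ forall r', R0 r' -> emp_CE D r <= emp_CE D r') /\
      (forall rs : nat -> (arm -> R),
         (forall m, R0 (rs m)) ->
         (fun m => emp_CE D (rs m)) @ \oo --> inf [set emp_CE D r | r in @R0 R] ->
         (fun m => pop_CE mu (rs m) - pop_CE mu (@rstar R)) @ \oo --> +oo).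
Proof.
move=> n0 mu0 mupos HD HK.
have K1 := @K_ge1 _ _ HK.
set K := \sum_(i < n) _ in K1.
have shR0 : forall r c, R0 r -> R0 (shift r c).
  by move=> r c; rewrite /R0 /shift /= => ->; rewrite addr0.
have Hsh := fun r c => @emp_shift _ _ r c HD.
have ninv : 0 < n%:R^-1 :> R by rewrite invr_gt0 ltr0n.
split.
  case=> r [r0 hmin]; have := hmin _ (shR0 r 1 r0); rewrite Hsh.
  have hl := @lam_lt (r a0 - r a1) (r a0 - r a1 + 1) ltac:(lra).
  have : 0 < n%:R^-1 * K * (lam (r a0 - r a1 + 1) - lam (r a0 - r a1)).
    by rewrite !mulr_gt0 // ?subr_gt0 // (lt_le_trans ltr01).
  rewrite -/K; lra.
move=> rs hrs hcv.
set L := inf _ in hcv.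
have hlb : has_lbound [set emp_CE D r | r in @R0 R].
  by exists 0 => y [r _ <-]; exact: emp_ge0.
have key1 : forall r, R0 r -> n%:R^-1 * (- lam (r a0 - r a1)) <= emp_CE D r - L.
  move=> r r0; apply/ler_addgt0Pr => e e0.
  set t := r a0 - r a1.
  have nK : 0 < n%:R^-1 * K by rewrite mulr_gt0 // (lt_le_trans ltr01).
  set d := e / (n%:R^-1 * K).
  have d0 : 0 < d by rewrite divr_gt0.
  have hd := @lam_big d d0.
  have hL : L <= emp_CE D (shift r (- ln d - t)).
    by apply: (ge_inf hlb); exists (shift r (- ln d - t)) => //; exact: shR0.
  move: hL; rewrite Hsh -/t -/K (_ : t + (- ln d - t) = - ln d); last by ring.
  have hA : - e <= n%:R^-1 * K * lam (- ln d).
    have := ler_wpM2l (ltW nK) hd.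
    by rewrite mulrN /d mulrCA divff ?mulr1 // lt0r_neq0.
  have hB : n%:R^-1 * (- lam t) <= n%:R^-1 * K * (- lam t).
    rewrite -subr_ge0 (_ : _ - _ = n%:R^-1 * (K - 1) * (- lam t)); last by ring.
    apply: mulr_ge0; first by rewrite mulr_ge0 ?subr_ge0 // ltW.
    rewrite oppr_ge0; exact: lsig_le0.
  rewrite mulrBr; move: hA hB; rewrite !mulrN; lra.
set a := mu (a0, a1) * sigmoid (-1).
have apos : 0 < a by rewrite mulr_gt0 // sig_gt0.
set C0 := pop_CE mu (@rstar R).
apply/cvgryPge => A.
set eps := expR (- ((A + C0) / a)).
have eps0 : 0 < eps * n%:R^-1 by rewrite mulr_gt0 // expR_gt0.
move/cvgr_dist_lt: hcv => /(_ _ eps0); apply: filterS => m hm /=.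
have r0 := hrs m.
have k1 := key1 _ r0.
set t := rs m a0 - rs m a1 in k1.
have hs : sigmoid (rs m a1 - rs m a0) <= - lam t.
  rewrite -opprB sigN; have := @ln_le_sub1 (sigmoid t) (sig_gt0 t); rewrite /lam; lra.
have hw : emp_CE D (rs m) - L < eps * n%:R^-1.
  by apply: le_lt_trans hm; rewrite distrC ler_norm.
have hs2 : sigmoid (rs m a1 - rs m a0) < eps.
  rewrite -(ltr_pM2r ninv); apply: le_lt_trans hw.
  apply: le_trans k1; by rewrite mulrC ler_pM2l.
have hl : lam (rs m a1 - rs m a0) <= - ((A + C0) / a).
  rewrite /lam -(expRK (- ((A + C0) / a))) ler_ln ?posrE ?sig_gt0 ?expR_gt0 //.
  exact: ltW.
have hp := @pop_lb mu (rs m) mu0.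
have : a * ((A + C0) / a) <= a * (- lam (rs m a1 - rs m a0)).
  by apply: ler_wpM2l; [exact: ltW | lra].
rewrite mulrCA divff ?mulr1 ?lt0r_neq0 //.
rewrite -/a in hp; lra.
Qed.


Definition wX (mu : arm * arm -> R) (X : seq sample) (s : sample) : R :=
  if s \in X then sample_prob mu s else 0.

Lemma sp_ge0 (mu : arm * arm -> R) s : (forall p, 0 <= mu p) -> 0 <= sample_prob mu s.
Proof.
move=> mu0; case: s => [[a a'] y] /=; rewrite mulr_ge0 //.
case: y; first exact: ltW (sig_gt0 _).
by rewrite subr_ge0 ltW // sig_lt1.
Qed.

Lemma prob_lb n (mu : arm * arm -> R) (E : {ffun 'I_n -> sample} -> Prop) (A B : seq sample) :
  (forall p, 0 <= mu p) ->
  (forall D : {ffun 'I_n -> sample}, (forall i, D i \in A) -> ~ (forall i, D i \in B) -> E D) ->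
  (\sum_s wX mu A s) ^+ n - (\sum_s wX mu B s) ^+ n <= @dataset_prob R n mu E.
Proof.
move=> mu0 HE.
have pc : forall x : R, x ^+ n = \prod_(i < n) x.
  by move=> x; rewrite prodr_const card_ord.
rewrite !pc !bigA_distr_bigA /= /dataset_prob big_mkcond /= -sumrB.
rewrite [X in _ <= X]big_mkcond /=; apply: ler_sum => D _.
have wge0 : forall X s, 0 <= wX mu X s.
  by move=> X s; rewrite /wX; case: ifP => // _; exact: sp_ge0.
have PB0 : 0 <= \prod_i wX mu B (D i) by apply: prodr_ge0 => i _.
have P0 : 0 <= \prod_(i < n) sample_prob mu (D i) by apply: prodr_ge0 => i _; exact: sp_ge0.
case: (boolP [forall i, D i \in A]) => [/forallP hA | hA].
  have -> : \prod_i wX mu A (D i) = \prod_(i < n) sample_prob mu (D i).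
    by apply: eq_bigr => i _; rewrite /wX hA.
  case: (boolP [forall i, D i \in B]) => [/forallP hB | hB].
    have -> : \prod_i wX mu B (D i) = \prod_(i < n) sample_prob mu (D i).
      by apply: eq_bigr => i _; rewrite /wX hB.
    by rewrite subrr; case: ifP.
  have -> : `[< E D >] = true.
    apply/asboolP; apply: HE; first exact: hA.
    move=> hB'; move: hB; rewrite negb_forall => /existsP [j]; by rewrite hB'.
  rewrite /=; lra.
move: hA; rewrite negb_forall => /existsP [i hi].
have -> : \prod_i wX mu A (D i) = 0.
  by rewrite (bigD1 i) //= /wX (negbTE hi) mul0r.
rewrite sub0r; apply: le_trans (_ : 0 <= _); first by rewrite oppr_le0.
by case: ifP.
Qed.


Lemma bern (x : R) m : 0 <= x <= 1 -> 1 - m%:R * x <= (1 - x) ^+ m.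
Proof.
move=> /andP[x0 x1]; elim: m => [|m IH]; first by rewrite mul0r subr0 expr0.
rewrite exprS.
have hp : 0 <= (1 - x) ^+ m by rewrite exprn_ge0 // subr_ge0.
have h : (1 - x) * (1 - m%:R * x) <= (1 - x) * (1 - x) ^+ m.
  by apply: ler_wpM2l; rewrite ?subr_ge0.
have hm : 0 <= m%:R :> R by [].
rewrite -natr1 (_ : 1 - (m%:R + 1) * x = (1 - x) * (1 - m%:R * x) - m%:R * x * x); last by ring.
have : 0 <= m%:R * x * x by rewrite !mulr_ge0.
lra.
Qed.

Lemma e_ge2 : 2 <= expR (1 : R).
Proof. by have := @expR_ge1Dx R 1; rewrite (_ : 1 + 1 = 2 :> R) //. Qed.

Lemma num_bound n : (0 < n)%N ->
  9 / 100 <= (n%:R^-1 * sigmoid 1 + (1 - n%:R^-1)) ^+ n - (1 - n%:R^-1) ^+ n :> R.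
Proof.
move=> n0.
have nR : 0 < n%:R :> R by rewrite ltr0n.
have n1 : 1 <= n%:R :> R by rewrite ler1n.
set q := n%:R^-1.
have q0 : 0 < q by rewrite invr_gt0.
have q1 : q <= 1 by rewrite invr_le1 // ?unitfE ?lt0r_neq0.
have nq : n%:R * q = 1 by rewrite divff // lt0r_neq0.
have e2 := e_ge2.
have s1 : 2 / 3 <= sigmoid (1 : R).
  rewrite /sigmoid ler_pdivlMr ?addr_gt0 ?expR_gt0 //; lra.
have hA : 1 - (1 - sigmoid 1) <= (q * sigmoid 1 + (1 - q)) ^+ n.
  have -> : q * sigmoid 1 + (1 - q) = 1 - q * (1 - sigmoid 1) by ring.
  have := @bern (q * (1 - sigmoid 1)) n.
  rewrite mulrA nq mul1r; apply.
  have := sig_lt1 1; have := sig_gt0 1 => a b.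
  apply/andP; split; first by rewrite mulr_ge0 ?subr_ge0 // ltW.
  rewrite -[X in _ <= X]mul1r; apply: ler_pM; [exact: ltW | lra | exact: q1 | lra].
have hB : (1 - q) ^+ n <= expR (-1).
  apply: le_trans (_ : expR (- q) ^+ n <= _).
    apply: lerXn2r; [by rewrite nnegrE subr_ge0 | by rewrite nnegrE ltW ?expR_gt0 | exact: expR_ge1Dx].
  by rewrite -expRM_natl mulrN nq.
have hC : expR (-1) <= 1 / 2 :> R.
  by rewrite expRN mul1r lef_pV2 ?posrE ?expR_gt0.

lra.
Qed.


Definition muN (q : R) (x : arm * arm) : R :=
  if x == (a0, a1) then q else if x == (a1, a2) then 1 - q else 0.

Lemma muN_pd q : 0 <= q <= 1 -> pair_distr (muN q).
Proof.
move=> /andP[q0 q1]; split; [|split].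
- by move=> p; rewrite /muN; case: ifP => // _; case: ifP => // _; rewrite subr_ge0.
- rewrite (bigD1 (a0, a1)) //= (bigD1 (a1, a2)) //= big1.
    by rewrite /muN /=; ring.
  by move=> p /andP[h1 h2]; rewrite /muN (negbTE h1) (negbTE h2).
- move=> a; rewrite /muN; case: ifP => [/eqP[e1 e2]|_].
    by move: e2; rewrite e1.
  by case: ifP => // /eqP[e1 e2]; move: e2; rewrite e1.
Qed.

Lemma sumA q : \sum_s wX (muN q) [:: s0; s1; s2] s = q * sigmoid 1 + (1 - q).
Proof.
rewrite /wX -big_mkcond -big_uniq //= !big_cons big_nil.
rewrite /sample_prob /muN /rstar /=.
rewrite (_ : 1 - 0 = 1 :> R); last by ring.
ring.
Qed.

Lemma sumB q : \sum_s wX (muN q) [:: s1; s2] s = 1 - q.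
Proof.
rewrite /wX -big_mkcond -big_uniq //= !big_cons big_nil.
rewrite /sample_prob /muN /rstar /=.
ring.
Qed.
End S.

Theorem theorem2 (R : realType) (n : nat) (hn : (500 < n)%N) :
  exists mu : arm * arm -> R,
    pair_distr mu /\
    @dataset_prob R n mu (fun D =>
      (~ exists r : arm -> R, R0 r /\ forall r', R0 r' -> emp_CE D r <= emp_CE D r') /\
      (forall rs : nat -> (arm -> R),
         (forall m, R0 (rs m)) ->
         (fun m => emp_CE D (rs m)) @ \oo --> inf [set emp_CE D r | r in @R0 R] ->
         (fun m => pop_CE mu (rs m) - pop_CE mu (@rstar R)) @ \oo --> +oo))
    >= 9 / 100.
Proof.
have n0 : (0 < n)%N by apply: leq_trans hn.
have nR : 0 < n%:R :> R by rewrite ltr0n.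
have q0 : 0 < n%:R^-1 :> R by rewrite invr_gt0.
have q1 : n%:R^-1 <= 1 :> R by rewrite invr_le1 // ?unitfE ?lt0r_neq0 // ler1n.
have pd := @muN_pd R (n%:R^-1) ltac:(by rewrite (ltW q0) q1).
exists (muN R (n%:R^-1)); split => //.
apply: le_trans (@num_bound R n n0) _.
rewrite -sumA -sumB.
apply: prob_lb; first by case: pd.
move=> D hA hB.
apply: event => //.
- by case: pd.
- have [i hi] : exists i, D i \notin [:: s1; s2].
    apply/existsP; rewrite -negb_forall; apply/negP => /forallP; exact: hB.
  exists i; move: (hA i) hi; rewrite !inE.
  by case/orP => [/eqP //|->].
Qed.
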